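(* For every integer $r\ge1$, $\mathrm{Var}(\mu^{(r)})\ge\frac b4\lambda(r)$.
   Context: Fix an integer $b\ge2$. For $n\in\mathbb{N}$ with base-$b$ digits $n_k$, $s(n):=\sum_kn_k$. For $r,n\in\mathbb{N}$, $\Delta^{(r)}(n):=s(n+r)-s(n)$, and $\mu^{(r)}(d):=\lim_{N\to\infty}\frac1N|\{n<N:\Delta^{(r)}(n)=d\}|$ for $d\in\mathbb{Z}$; these limits exist and $\mu^{(r)}$ is a probability measure on $\mathbb{Z}$ with finite moments; $\mathrm{Var}(\mu^{(r)})$ is its variance. Blocks: write the expansion of $r\ge1$ as the digit string $r_\ell\cdots r_0$, $r_\ell\neq0$. A block is either a maximal run of consecutive $0$ digits (a block of $0$'s), or a maximal run of consecutive digits equal to $b-1$, or (when $b\ge3$) a single digit with value in $\{1,\dots,b-2\}$. $\lambda(r)$ is the number of blocks of $r$ that are not blocks of $0$'s (non-zero blocks). *)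

(* Defs.v *)
From Stdlib Require Import Reals ZArith Arith List.
From Coquelicot Require Import Coquelicot.
Open Scope R_scope.

Definition digit (b n k : nat) : nat := (n / b ^ k) mod b.

(* s(n): base-b digit sum.  For b >= 2 all digits of index > n vanish,
   so summing over k = 0..n is the full digit sum. *)
Definition s (b n : nat) : nat :=
  fold_right Nat.add 0%nat (map (digit b n) (seq 0 (S n))).

Definition Delta (b r n : nat) : Z :=
  (Z.of_nat (s b (n + r)) - Z.of_nat (s b n))%Z.

Definition freq (b r : nat) (d : Z) (N : nat) : R :=
  INR (length (filter (fun n => Z.eqb (Delta b r n) d) (seq 0 N))) / INR N.

Definition mu (b r : nat) (d : Z) : R := real (Lim_seq (freq b r d)).

(* Sum over d in Z, enumerated as 0, -1, 1, -2, 2, ... (paired). *)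
Definition zterm (f : Z -> R) (k : nat) : R :=
  f (Z.of_nat k) + f (- Z.of_nat k - 1)%Z.

Definition zsum (f : Z -> R) : R := Series (zterm f).

Definition mean_mu (b r : nat) : R := zsum (fun d => IZR d * mu b r d).

Definition var_mu (b r : nat) : R :=
  zsum (fun d => (IZR d - mean_mu b r) ^ 2 * mu b r d).

(* lambda(r): number of non-zero blocks of the base-b expansion of r.
   Non-zero blocks are (i) maximal runs of digits equal to b-1 -- counted
   by their lowest position k (digit k = b-1 and k = 0 or digit (k-1) <> b-1)
   -- and (ii) single digits with value in {1,...,b-2}.  Positions above the
   leading digit are zero and never counted, so scanning k = 0..r suffices. *)
Definition block_start (b r k : nat) : bool :=
  match k with
  | O => Nat.eqb (digit b r 0) (b - 1)
  | S k' => andb (Nat.eqb (digit b r k) (b - 1)) (negb (Nat.eqb (digit b r k') (b - 1)))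
  end.

Definition mid_digit (b r k : nat) : bool :=
  andb (Nat.leb 1 (digit b r k)) (Nat.leb (digit b r k) (b - 2)).

Definition lambda (b r : nat) : nat :=
  length (filter (fun k => orb (block_start b r k) (mid_digit b r k)) (seq 0 (S r))).

(* Main.v *)
Require Import Defs.
From Stdlib Require Import Reals ZArith Arith List.
From Coquelicot Require Import Coquelicot.
Open Scope R_scope.

From Stdlib Require Import Lia Lra Psatz.
Import Defs.

Open Scope R_scope.

Section Digits.
Variable b : nat.
Hypothesis hb : (2 <= b)%nat.

Definition sd (n N : nat) : nat := fold_right Nat.add 0%nat (map (digit b n) (seq 0 N)).

Lemma fold_add_app l1 l2 : fold_right Nat.add 0%nat (l1 ++ l2) =
  (fold_right Nat.add 0%nat l1 + fold_right Nat.add 0%nat l2)%nat.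
Proof. induction l1; simpl; lia. Qed.

Lemma sd_S n N : sd n (S N) = (sd n N + digit b n N)%nat.
Proof. unfold sd. rewrite seq_S, map_app, fold_add_app. simpl. lia. Qed.

Lemma digit_big n k : (n < b ^ k)%nat -> digit b n k = 0%nat.
Proof. intros H. unfold digit. rewrite Nat.div_small by lia. apply Nat.mod_0_l. lia. Qed.

Lemma sd_stable n N : (n < N)%nat -> sd n N = s b n.
Proof.
  intros H. induction H.
  - reflexivity.
  - rewrite sd_S, IHle, digit_big; [lia|].
    assert (m < b ^ m)%nat by (apply Nat.pow_gt_lin_r; lia). lia.
Qed.

Lemma sd_shift n N : sd n (S N) = (n mod b + sd (n / b) N)%nat.
Proof.
  unfold sd. simpl. f_equal.
  - unfold digit. rewrite Nat.pow_0_r, Nat.div_1_r. reflexivity.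
  - f_equal. rewrite <- seq_shift, map_map. apply map_ext. intros k.
    unfold digit. rewrite Nat.pow_succ_r', Nat.div_div; try lia.
    apply Nat.pow_nonzero; lia.
Qed.

Lemma s_rec n : s b n = (n mod b + s b (n / b))%nat.
Proof.
  destruct n as [|n'].
  - rewrite Nat.div_0_l, Nat.mod_0_l by lia. reflexivity.
  - change (s b (S n')) with (sd (S n') (S (S n'))).
    rewrite sd_shift. f_equal. apply sd_stable.
    assert (S n' / b < S n')%nat by (apply Nat.div_lt; lia). lia.
Qed.

Lemma s_0 : s b 0 = 0%nat.
Proof. unfold s, digit. simpl. rewrite Nat.Div0.mod_0_l. reflexivity. Qed.

Lemma s_lin q t : (t < b)%nat -> s b (b * q + t) = (t + s b q)%nat.
Proof.
  intros H. rewrite s_rec. f_equal.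
  - rewrite Nat.mul_comm, Nat.add_comm, Nat.Div0.mod_add. apply Nat.mod_small; auto.
  - f_equal. rewrite Nat.mul_comm, Nat.div_add_l by lia. rewrite Nat.div_small; lia.
Qed.

Lemma s_1 : s b 1 = 1%nat.
Proof. assert (H : s b (b * 0 + 1) = (1 + s b 0)%nat) by (apply s_lin; lia).
  replace (b * 0 + 1)%nat with 1%nat in H by lia. rewrite H, s_0. reflexivity. Qed.

Lemma s_block K q m : (m < b ^ K)%nat -> s b (q * b ^ K + m) = (s b q + s b m)%nat.
Proof.
  revert q m. induction K as [|K IH]; intros q m Hm.
  - simpl in Hm. assert (m = 0)%nat by lia. subst. rewrite s_0. replace (q * b ^ 0 + 0)%nat with q by (simpl; lia). lia.
  - rewrite (Nat.div_mod m b) by lia.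
    set (m1 := (m / b)%nat). set (t := (m mod b)%nat).
    assert (Ht : (t < b)%nat) by (apply Nat.mod_upper_bound; lia).
    assert (Hm1 : (m1 < b ^ K)%nat).
    { unfold m1. apply Nat.Div0.div_lt_upper_bound. rewrite <- Nat.pow_succ_r'. lia. }
    replace (q * b ^ S K + (b * m1 + t))%nat with (b * (q * b ^ K + m1) + t)%nat
      by (rewrite Nat.pow_succ_r'; lia).
    rewrite !s_lin by auto. rewrite IH by auto. lia.
Qed.

Lemma s_succ_le n : (s b (S n) <= S (s b n))%nat.
Proof.
  induction n as [n IH] using lt_wf_ind.
  rewrite (Nat.div_mod n b) by lia.
  set (q := (n / b)%nat). set (t := (n mod b)%nat).
  assert (Ht : (t < b)%nat) by (apply Nat.mod_upper_bound; lia).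
  destruct (Nat.eq_dec t (b - 1)) as [E|E].
  - replace (S (b * q + t)) with (b * (S q) + 0)%nat by lia.
    rewrite !s_lin by lia.
    destruct (Nat.eq_dec n 0) as [Z|Z].
    + unfold q. rewrite Z, Nat.div_0_l by lia. rewrite s_1, s_0. lia.
    + assert (q < n)%nat by (unfold q; apply Nat.div_lt; lia).
      specialize (IH q H). lia.
  - replace (S (b * q + t)) with (b * q + S t)%nat by lia.
    rewrite !s_lin by lia. lia.
Qed.

Lemma s_add_le n r : (s b (n + r) <= s b n + r)%nat.
Proof.
  induction r. rewrite Nat.add_0_r; lia.
  replace (n + S r)%nat with (S (n + r)) by lia. pose proof (s_succ_le (n + r)). lia.
Qed.

Lemma s_bound K n : (n < b ^ K)%nat -> (s b n <= (b - 1) * K)%nat.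
Proof.
  revert n. induction K; intros n Hn.
  - simpl in Hn. assert (n = 0)%nat by lia. subst. rewrite s_0. lia.
  - rewrite s_rec. assert (n mod b < b)%nat by (apply Nat.mod_upper_bound; lia).
    assert (n / b < b ^ K)%nat.
    { apply Nat.Div0.div_lt_upper_bound. rewrite <- Nat.pow_succ_r'. lia. }
    specialize (IHK _ H0). nia.
Qed.

End Digits.

Open Scope nat_scope.

Section DeltaLam.
Variable b : nat.
Hypothesis hb : (2 <= b)%nat.

Lemma Delta_rec r' a n' j : (a < b)%nat -> (j < b)%nat ->
  Delta b (b * r' + a) (b * n' + j) =
  if (j + a <? b)%nat then (Z.of_nat a + Delta b r' n')%Z
  else (Z.of_nat a - Z.of_nat b + Delta b (S r') n')%Z.
Proof.
  intros Ha Hj. unfold Delta.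
  rewrite (s_lin b hb n' j Hj).
  destruct (Nat.ltb_spec (j + a) b) as [H|H].
  - replace (b * n' + j + (b * r' + a))%nat with (b * (n' + r') + (j + a))%nat by lia.
    rewrite s_lin by auto. lia.
  - replace (b * n' + j + (b * r' + a))%nat with (b * (n' + S r') + (j + a - b))%nat by lia.
    rewrite s_lin by lia. lia.
Qed.

Lemma Delta_le r n : (Delta b r n <= Z.of_nat r)%Z.
Proof. unfold Delta. pose proof (s_add_le b hb n r). lia. Qed.

Lemma Delta_ge K r n : (n < b ^ K)%nat -> (- Z.of_nat ((b - 1) * K) <= Delta b r n)%Z.
Proof. intros H. unfold Delta. pose proof (s_bound b hb K n H). lia. Qed.

Lemma Delta_block K r q m : (m + r < b ^ K)%nat ->
  Delta b r (q * b ^ K + m) = Delta b r m.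
Proof.
  intros H. unfold Delta.
  replace (q * b ^ K + m + r)%nat with (q * b ^ K + (m + r))%nat by lia.
  rewrite !(s_block b hb K) by lia. lia.
Qed.

Lemma Delta_0 r : Delta b r 0 = Z.of_nat (s b r).
Proof. unfold Delta. rewrite s_0 by auto. simpl. lia. Qed.

Definition nc (f : nat -> bool) (N : nat) : nat := length (filter f (seq 0 N)).

Lemma nc_S f N : nc f (S N) = (nc f N + if f N then 1 else 0)%nat.
Proof. unfold nc. rewrite seq_S, filter_app, length_app. simpl. destruct (f N); simpl; lia. Qed.

Lemma nc_shift f N : nc f (S N) = ((if f 0%nat then 1 else 0) + nc (fun k => f (S k)) N)%nat.
Proof.
  induction N. unfold nc; simpl. destruct (f 0%nat); reflexivity.
  rewrite nc_S, IHN, (nc_S (fun k => f (S k))). lia.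
Qed.

Lemma nc_ext f g N : (forall k, (k < N)%nat -> f k = g k) -> nc f N = nc g N.
Proof.
  induction N; intros H. reflexivity.
  rewrite !nc_S, IHN by (intros; apply H; lia). rewrite H by lia. reflexivity.
Qed.

Definition F (r k : nat) : bool := orb (block_start b r k) (mid_digit b r k).

Lemma F_big r k : (r < b ^ k)%nat -> F r k = false.
Proof.
  intros H. pose proof (digit_big b hb r k H) as D.
  assert (N0 : Nat.eqb 0 (b-1) = false) by (apply Nat.eqb_neq; lia).
  unfold F, block_start, mid_digit. destruct k; rewrite D, N0; reflexivity.
Qed.

Lemma nc_F_stable r N : (r <= N)%nat -> nc (F r) N = lambda b r.
Proof.
  intros H. unfold lambda. fold (F r). change (length (filter (F r) (seq 0 (S r)))) with (nc (F r) (S r)).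
  induction H.
  - rewrite nc_S, F_big. lia. apply Nat.pow_gt_lin_r; lia.
  - rewrite nc_S, IHle, F_big. lia. assert (m < b ^ m)%nat by (apply Nat.pow_gt_lin_r; lia). lia.
Qed.

Lemma digit_S r' a k : (a < b)%nat -> digit b (b * r' + a) (S k) = digit b r' k.
Proof.
  intros Ha. unfold digit. rewrite Nat.pow_succ_r', <- Nat.Div0.div_div.
  f_equal. f_equal. rewrite Nat.mul_comm, Nat.div_add_l by lia. rewrite Nat.div_small; lia.
Qed.

Lemma digit_0 r : digit b r 0 = (r mod b)%nat.
Proof. unfold digit. rewrite Nat.pow_0_r, Nat.div_1_r. reflexivity. Qed.

Lemma lam_rec r' a : (a < b)%nat ->
  (lambda b (b * r' + a) + (if andb (Nat.eqb a (b-1)) (Nat.eqb (r' mod b) (b-1)) then 1 else 0) =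
   lambda b r' + (if Nat.leb 1 a then 1 else 0))%nat.
Proof.
  intros Ha. set (r := (b * r' + a)%nat).
  destruct (Nat.eq_dec r 0) as [Z|Z].
  { assert (r' = 0 /\ a = 0)%nat as [-> ->] by (unfold r in Z; nia).
    subst r. replace (b * 0 + 0)%nat with 0%nat by lia.
    replace (Nat.eqb 0 (b-1)) with false by (symmetry; apply Nat.eqb_neq; lia). simpl. lia. }
  assert (Hr1 : nc (F r) (S r) = ((if F r 0 then 1 else 0) + (if F r 1 then 1 else 0)
             + nc (fun k => F r' (S k)) (r - 1))%nat).
  { replace (S r) with (S (S (r - 1))) by lia. rewrite nc_shift, nc_shift.
    rewrite (nc_ext (fun k => F r (S (S k))) (fun k => F r' (S k))). lia.
    intros k _. unfold F, block_start, mid_digit. unfold r. rewrite !digit_S by auto. reflexivity. }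
  assert (Hr2 : nc (F r') r = ((if F r' 0 then 1 else 0) + nc (fun k => F r' (S k)) (r - 1))%nat).
  { pose proof (nc_shift (F r') (r - 1)) as H. replace (S (r - 1)) with r in H by lia. exact H. }
  rewrite <- (nc_F_stable r (S r)) by lia.
  rewrite <- (nc_F_stable r' r) by (unfold r; nia).
  rewrite Hr1, Hr2.
  assert (E1 : F r 0 = Nat.leb 1 a).
  { unfold F, block_start, mid_digit. unfold r. rewrite digit_0.
    replace ((b * r' + a) mod b)%nat with a.
    2:{ rewrite Nat.mul_comm, Nat.add_comm, Nat.Div0.mod_add, Nat.mod_small; lia. }
    destruct (Nat.eqb_spec a (b-1)); destruct (Nat.leb_spec 1 a); destruct (Nat.leb_spec a (b-2)); simpl; lia. }
  assert (E2 : F r 1 = orb (andb (Nat.eqb (r' mod b) (b-1)) (negb (Nat.eqb a (b-1)))) (mid_digit b r' 0)).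
  { unfold F, block_start, mid_digit. unfold r. rewrite !digit_S by auto. rewrite !digit_0.
    replace ((b * r' + a) mod b)%nat with a.
    2:{ rewrite Nat.mul_comm, Nat.add_comm, Nat.Div0.mod_add, Nat.mod_small; lia. }
    reflexivity. }
  assert (E3 : F r' 0 = orb (Nat.eqb (r' mod b) (b-1)) (mid_digit b r' 0)).
  { unfold F, block_start. rewrite digit_0. reflexivity. }
  rewrite E1, E2, E3. unfold mid_digit. rewrite digit_0.
  destruct (Nat.eqb_spec (r' mod b) (b-1)); destruct (Nat.eqb_spec a (b-1));
  destruct (Nat.leb_spec 1 a); destruct (Nat.leb_spec 1 (r' mod b)); destruct (Nat.leb_spec (r' mod b) (b-2));
  simpl; lia.
Qed.

Lemma lam_0 : lambda b 0 = 0%nat.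
Proof.
  unfold lambda; simpl. unfold block_start, mid_digit. rewrite digit_0, Nat.Div0.mod_0_l.
  replace (Nat.eqb 0 (b-1)) with false by (symmetry; apply Nat.eqb_neq; lia). reflexivity.
Qed.

Lemma lam_succ r : (lambda b r <= lambda b (S r) + 1 + if Nat.eqb (r mod b) (b-1) then 1 else 0)%nat.
Proof.
  induction r as [r IH] using lt_wf_ind.
  pose proof (Nat.div_mod r b ltac:(lia)) as Hr.
  set (q := (r / b)%nat) in *. set (x := (r mod b)%nat) in *.
  assert (Hx : (x < b)%nat) by (apply Nat.mod_upper_bound; lia).
  pose proof (lam_rec q x Hx) as L1. rewrite <- Hr in L1.
  destruct (Nat.eqb_spec x (b-1)) as [E|E].
  - replace (S r) with (b * S q + 0)%nat by lia.
    pose proof (lam_rec (S q) 0 ltac:(lia)) as L2.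
    replace (Nat.eqb 0 (b-1)) with false in L2 by (symmetry; apply Nat.eqb_neq; lia). simpl in L2.
    destruct (Nat.eq_dec r 0) as [Z|Z].
    { rewrite Z, lam_0. lia. }
    assert (q < r)%nat by (unfold q; apply Nat.div_lt; lia).
    specialize (IH q H).
    replace (Nat.eqb x (b-1)) with true in L1 by (symmetry; apply Nat.eqb_eq; auto).
    replace (Nat.leb 1 x) with true in L1 by (symmetry; apply Nat.leb_le; lia).
    destruct (Nat.eqb_spec (q mod b) (b-1)); simpl in L1; lia.
  - replace (S r) with (b * q + S x)%nat by lia.
    pose proof (lam_rec q (S x) ltac:(lia)) as L2.
    replace (Nat.eqb x (b-1)) with false in L1 by (symmetry; apply Nat.eqb_neq; auto).
    destruct (Nat.leb_spec 1 x); destruct (Nat.eqb_spec (S x) (b-1)); destruct (Nat.eqb_spec (q mod b) (b-1));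
      simpl in L1, L2; lia.
Qed.

End DeltaLam.

Open Scope R_scope.

Open Scope R_scope.

Fixpoint rsum (f : nat -> R) (n : nat) : R :=
  match n with O => 0 | S m => rsum f m + f m end.

Lemma rsum_ext f g n : (forall k, (k < n)%nat -> f k = g k) -> rsum f n = rsum g n.
Proof. induction n; intros H; simpl. reflexivity. rewrite IHn by (intros; apply H; lia). rewrite H by lia. reflexivity. Qed.

Lemma rsum_plus f g n : rsum (fun k => f k + g k) n = rsum f n + rsum g n.
Proof. induction n; simpl. lra. rewrite IHn. lra. Qed.

Lemma rsum_scal c f n : rsum (fun k => c * f k) n = c * rsum f n.
Proof. induction n; simpl. lra. rewrite IHn. lra. Qed.

Lemma rsum_const c n : rsum (fun _ => c) n = INR n * c.
Proof. induction n. simpl; lra. change (rsum (fun _ => c) (S n)) with (rsum (fun _ => c) n + c). rewrite IHn, S_INR. lra. Qed.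

Lemma rsum_le f g n : (forall k, (k < n)%nat -> f k <= g k) -> rsum f n <= rsum g n.
Proof. induction n; intros H; simpl. lra. pose proof (H n ltac:(lia)). pose proof (IHn ltac:(intros; apply H; lia)). lra. Qed.

Lemma rsum_nonneg f n : (forall k, (k < n)%nat -> 0 <= f k) -> 0 <= rsum f n.
Proof. intros H. replace 0 with (rsum (fun _ => 0) n) at 1 by (rewrite rsum_const; lra). apply rsum_le. auto. Qed.

Lemma rsum_app f m n : rsum f (m + n) = rsum f m + rsum (fun k => f (m + k)%nat) n.
Proof. induction n; simpl. rewrite Nat.add_0_r. lra. rewrite Nat.add_succ_r. simpl. rewrite IHn. lra. Qed.

Lemma rsum_mult f M c : rsum f (M * c) = rsum (fun i => rsum (fun j => f (i * c + j)%nat) c) M.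
Proof.
  induction M; simpl. reflexivity.
  rewrite <- IHM. replace (c + M * c)%nat with (M * c + c)%nat by lia. apply rsum_app.
Qed.

Lemma rsum_mono f m n : (m <= n)%nat -> (forall k, 0 <= f k) -> rsum f m <= rsum f n.
Proof.
  intros H Hf. replace n with (m + (n - m))%nat by lia. rewrite rsum_app.
  pose proof (rsum_nonneg (fun k => f (m + k)%nat) (n - m) ltac:(intros; apply Hf)). lra.
Qed.

Lemma rsum_split c u v N : (c <= N)%nat ->
  rsum (fun j => if (j <? c)%nat then u else v) N = INR c * u + INR (N - c) * v.
Proof.
  induction N; intros H.
  - assert (c = 0)%nat by lia. subst. simpl. lra.
  - destruct (Nat.eq_dec c (S N)) as [E|E].
    + subst. rewrite Nat.sub_diag. simpl (INR 0).
      rewrite (rsum_ext _ (fun _ => u)). rewrite rsum_const. lra.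
      intros k Hk. destruct (Nat.ltb_spec k (S N)); [reflexivity|lia].
    + cbn [rsum]. rewrite IHN by lia. destruct (Nat.ltb_spec N c); [lia|].
      replace (S N - c)%nat with (S (N - c)) by lia. rewrite S_INR. lra.
Qed.

Lemma rsum_sub_le_bad (M r : nat) :
  rsum (fun m => if (m + r <? M)%nat then 0 else 1) M <= INR r.
Proof.
  assert (forall N, rsum (fun m => if (m + r <? M)%nat then 0 else 1) N = INR (N - (M - r))).
  { induction N; cbn [rsum]. reflexivity. rewrite IHN.
    destruct (Nat.ltb_spec (N + r) M).
    - replace (S N - (M - r))%nat with (N - (M - r))%nat by lia. lra.
    - replace (S N - (M - r))%nat with (S (N - (M - r))) by lia. rewrite S_INR. lra. }
  rewrite H. apply le_INR. lia.
Qed.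

Section Sums.
Variable b : nat.
Hypothesis hb : (2 <= b)%nat.

Definition D (r n : nat) : R := IZR (Delta b r n).
Definition S1 (K r : nat) : R := rsum (D r) (b ^ K).
Definition S2 (K r : nat) : R := rsum (fun n => (D r n) ^ 2) (b ^ K).

Lemma INR_b_pos : 0 < INR b.
Proof. apply lt_0_INR. lia. Qed.

Lemma pow_pos_nat K : (0 < b ^ K)%nat.
Proof. apply Nat.neq_0_lt_0. apply Nat.pow_nonzero. lia. Qed.

Lemma D_rec r' a n' j : (a < b)%nat -> (j < b)%nat ->
  D (b * r' + a) (n' * b + j) =
  if (j <? b - a)%nat then INR a + D r' n' else INR a - INR b + D (S r') n'.
Proof.
  intros Ha Hj. unfold D. rewrite (Nat.mul_comm n' b). rewrite Delta_rec by auto.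
  destruct (Nat.ltb_spec (j + a) b); destruct (Nat.ltb_spec j (b - a)); try lia.
  - rewrite plus_IZR, <- INR_IZR_INZ. reflexivity.
  - rewrite !plus_IZR, minus_IZR, <- !INR_IZR_INZ. reflexivity.
Qed.

Lemma sum_step (g : R -> R) K r' a : (a < b)%nat ->
  rsum (fun n => g (D (b * r' + a) n)) (b ^ S K) =
  rsum (fun n' => INR (b - a) * g (INR a + D r' n') + INR a * g (INR a - INR b + D (S r') n')) (b ^ K).
Proof.
  intros Ha. replace (b ^ S K)%nat with (b ^ K * b)%nat by (rewrite Nat.pow_succ_r'; lia). rewrite rsum_mult.
  apply rsum_ext. intros n' _.
  rewrite (rsum_ext _ (fun j => if (j <? b - a)%nat then g (INR a + D r' n') else g (INR a - INR b + D (S r') n'))).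
  - rewrite rsum_split by lia. replace (b - (b - a))%nat with a by lia. lra.
  - intros j Hj. rewrite D_rec by auto. destruct (j <? b - a)%nat; reflexivity.
Qed.

Lemma D_zero n : D 0 n = 0.
Proof. unfold D, Delta. rewrite Nat.add_0_r. rewrite Z.sub_diag. reflexivity. Qed.

Lemma S2_zero K : S2 K 0 = 0.
Proof. unfold S2. rewrite (rsum_ext _ (fun _ => 0)). rewrite rsum_const. lra. intros. rewrite D_zero. simpl. lra. Qed.

Lemma S1_step K r' a : (a < b)%nat ->
  S1 (S K) (b * r' + a) = INR (b - a) * (INR a * INR (b ^ K) + S1 K r')
     + INR a * ((INR a - INR b) * INR (b ^ K) + S1 K (S r')).
Proof.
  intros Ha. unfold S1. rewrite (sum_step (fun x => x)) by auto.
  rewrite rsum_plus, !rsum_scal, !rsum_plus, !rsum_const. ring.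
Qed.

Lemma S2_step K r' a : (a < b)%nat ->
  S2 (S K) (b * r' + a) = INR (b - a) * (INR a ^ 2 * INR (b ^ K) + 2 * INR a * S1 K r' + S2 K r')
     + INR a * ((INR a - INR b) ^ 2 * INR (b ^ K) + 2 * (INR a - INR b) * S1 K (S r') + S2 K (S r')).
Proof.
  intros Ha. unfold S2, S1. rewrite (sum_step (fun x => x ^ 2)) by auto.
  rewrite rsum_plus, !rsum_scal.
  rewrite (rsum_ext (fun n' => (INR a + D r' n') ^ 2)
            (fun n' => INR a ^ 2 + (2 * INR a * D r' n' + D r' n' ^ 2))) by (intros; ring).
  rewrite (rsum_ext (fun n' => (INR a - INR b + D (S r') n') ^ 2)
            (fun n' => (INR a - INR b) ^ 2 + (2 * (INR a - INR b) * D (S r') n' + D (S r') n' ^ 2))) by (intros; ring).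
  rewrite !rsum_plus, !rsum_scal, !rsum_const. ring.
Qed.

Lemma S1_val K j : (j <= b ^ K)%nat -> S1 K j = INR j.
Proof.
  revert j. induction K; intros j Hj.
  - simpl in Hj. unfold S1. simpl. unfold D. rewrite Delta_0 by auto.
    rewrite <- INR_IZR_INZ. destruct j as [|[|]]; try lia.
    + rewrite s_0 by auto. simpl. lra.
    + rewrite s_1 by auto. simpl. lra.
  - pose proof (Nat.div_mod j b ltac:(lia)) as Hd.
    set (j' := (j / b)%nat) in *. set (a := (j mod b)%nat) in *.
    assert (Ha : (a < b)%nat) by (apply Nat.mod_upper_bound; lia).
    rewrite Hd, S1_step by auto.
    rewrite Nat.pow_succ_r' in Hj.
    destruct (Nat.eq_dec a 0) as [Z|Z].
    + rewrite Z. rewrite IHK by nia. rewrite Nat.sub_0_r, Nat.add_0_r, mult_INR. simpl (INR 0). ring.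
    + rewrite !IHK by nia. rewrite minus_INR by lia. rewrite plus_INR, mult_INR, S_INR. ring.
Qed.

Lemma S2_rec K r' a : (a < b)%nat -> (S r' <= b ^ K)%nat ->
  S2 (S K) (b * r' + a) = INR (b - a) * S2 K r' + INR a * S2 K (S r')
     + INR a * INR (b - a) * (INR (b ^ S K) - 2).
Proof.
  intros Ha H. rewrite S2_step by auto. rewrite !S1_val by lia.
  rewrite Nat.pow_succ_r'. rewrite mult_INR, minus_INR, S_INR by lia. ring.
Qed.

Lemma S2_rec0 K r' : S2 (S K) (b * r') = INR b * S2 K r'.
Proof.
  pose proof (S2_step K r' 0 ltac:(lia)) as H. rewrite Nat.add_0_r in H. rewrite H.
  rewrite Nat.sub_0_r. simpl (INR 0). ring.
Qed.

Lemma S2_nonneg K r : 0 <= S2 K r.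
Proof. unfold S2. apply rsum_nonneg. intros. apply pow2_ge_0. Qed.

End Sums.

Open Scope R_scope.

Section Var.
Variable b : nat.
Hypothesis hb : (2 <= b)%nat.

Definition P (K r : nat) : R := S2 b K r / INR (b ^ K).

Lemma INR_pow_pos K : 0 < INR (b ^ K).
Proof. apply lt_0_INR. apply pow_pos_nat; auto. Qed.

Lemma P_nonneg K r : 0 <= P K r.
Proof. unfold P. apply Rdiv_le_0_compat. apply S2_nonneg. apply INR_pow_pos. Qed.

Lemma P_zero K : P K 0 = 0.
Proof. unfold P. rewrite S2_zero. unfold Rdiv. ring. Qed.

Lemma P_rec K r' a : (a < b)%nat -> (S r' <= b ^ K)%nat ->
  P (S K) (b * r' + a) = (INR (b - a) * P K r' + INR a * P K (S r')) / INR b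
     + INR a * INR (b - a) * (1 - 2 / INR (b ^ S K)).
Proof.
  intros Ha H. unfold P. rewrite S2_rec by auto.
  pose proof (INR_pow_pos K). pose proof (INR_b_pos b hb).
  rewrite Nat.pow_succ_r', mult_INR. field. lra.
Qed.

Lemma P_rec0 K r' : P (S K) (b * r') = P K r'.
Proof.
  unfold P. rewrite S2_rec0 by auto.
  pose proof (INR_pow_pos K). pose proof (INR_b_pos b hb).
  rewrite Nat.pow_succ_r', mult_INR. field. lra.
Qed.

Lemma bigpow K : (5 <= K)%nat -> (16 * b * b <= b ^ S K)%nat.
Proof.
  intros H. replace (S K) with (2 + (K - 1))%nat by lia. rewrite Nat.pow_add_r.
  assert (2 ^ 4 <= 2 ^ (K - 1))%nat by (apply Nat.pow_le_mono_r; lia).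
  assert (2 ^ (K - 1) <= b ^ (K - 1))%nat by (apply Nat.pow_le_mono_l; lia).
  simpl in *. nia.
Qed.

Lemma K1 a : (1 <= a)%nat -> (a <= b - 1)%nat -> (a + b + 1 <= 4 * a * (b - a))%nat.
Proof. intros. destruct (Nat.le_exists_sub (a + 1) b ltac:(lia)) as [c [Hc _]]. subst b.
  replace (c + (a + 1) - a)%nat with (c + 1)%nat by lia. nia. Qed.

Lemma K2 a : (1 <= a)%nat -> (a <= b - 2)%nat -> (2 * a + b + 1 <= 4 * a * (b - a))%nat.
Proof. intros. destruct (Nat.le_exists_sub (a + 2) b ltac:(lia)) as [c [Hc _]]. subst b.
  replace (c + (a + 2) - a)%nat with (c + 2)%nat by lia. nia. Qed.

Lemma lam_step r' a : (1 <= a)%nat -> (a < b)%nat ->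
  (b * lambda b (b * r' + a) + 1 <= (b - a) * lambda b r' + a * lambda b (S r') + 4 * a * (b - a))%nat.
Proof.
  intros H1 H2.
  pose proof (lam_rec b hb r' a H2) as L1. pose proof (lam_succ b hb r') as L2.
  set (l := lambda b (b * r' + a)) in *. set (l1 := lambda b r') in *. set (l2 := lambda b (S r')) in *.
  replace (Nat.leb 1 a) with true in L1 by (symmetry; apply Nat.leb_le; lia).
  destruct (Nat.eqb_spec (r' mod b) (b-1)) as [E|E]; destruct (Nat.eqb_spec a (b-1)) as [F|F]; simpl in L1.
  - assert (a * l1 <= a * (l2 + 1 + 1))%nat by (apply Nat.mul_le_mono_l; lia).
    assert (l = l1)%nat by lia. subst a. nia.
  - assert (a * l1 <= a * (l2 + 1 + 1))%nat by (apply Nat.mul_le_mono_l; lia).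
    assert (l = l1 + 1)%nat by lia. pose proof (K2 a H1 ltac:(lia)). nia.
  - assert (a * l1 <= a * (l2 + 1 + 0))%nat by (apply Nat.mul_le_mono_l; lia).
    assert (l = l1 + 1)%nat by lia. pose proof (K1 a H1 ltac:(lia)). nia.
  - assert (a * l1 <= a * (l2 + 1 + 0))%nat by (apply Nat.mul_le_mono_l; lia).
    assert (l = l1 + 1)%nat by lia. pose proof (K1 a H1 ltac:(lia)). nia.
Qed.

Lemma lam_1 : lambda b 1 = 1%nat.
Proof.
  pose proof (lam_rec b hb 0 1 ltac:(lia)) as L.
  replace (b * 0 + 1)%nat with 1%nat in L by lia. rewrite lam_0 in L by auto.
  rewrite Nat.Div0.mod_0_l in L.
  replace (Nat.eqb 0 (b-1)) with false in L by (symmetry; apply Nat.eqb_neq; lia).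
  rewrite Bool.andb_false_r in L. simpl in L. lia.
Qed.

Lemma P_one K : P (S K) 1 = P K 1 / INR b + INR (b - 1) * (1 - 2 / INR (b ^ S K)).
Proof.
  pose proof (pow_pos_nat b hb K).
  pose proof (P_rec K 0 1 ltac:(lia) ltac:(lia)) as H1.
  replace (b * 0 + 1)%nat with 1%nat in H1 by lia. rewrite H1.
  rewrite P_zero. simpl (INR 1). pose proof (INR_b_pos b hb). pose proof (INR_pow_pos (S K)). field. lra.
Qed.

Lemma pow_ge K : (K < b ^ K)%nat.
Proof. apply Nat.pow_gt_lin_r. lia. Qed.

Theorem I_main : forall r, (1 <= r)%nat ->
  exists K0, forall K, (K0 <= K)%nat -> 4 * P K r >= INR b * INR (lambda b r) + 1/2.
Proof.
  assert (Hb : 2 <= INR b) by (replace 2 with (INR 2) by reflexivity; apply le_INR; auto).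
  intros r. induction r as [r IH] using lt_wf_ind. intros Hr1.
  destruct (Nat.eq_dec r 1) as [E1|E1].
  { subst r. exists 4%nat. intros K HK. destruct K as [|K]; [lia|].
    rewrite P_one, lam_1. pose proof (P_nonneg K 1).
    assert (Hp : 16 <= INR (b ^ S K)).
    { replace 16 with (INR 16) by (simpl; lra). apply le_INR.
      assert (2 ^ 4 <= b ^ 4)%nat by (apply Nat.pow_le_mono_l; lia).
      assert (b ^ 4 <= b ^ S K)%nat by (apply Nat.pow_le_mono_r; lia). change (2 ^ 4)%nat with 16%nat in H0. lia. }
    assert (Hq : 2 / INR (b ^ S K) <= 1/8).
    { apply (Rmult_le_reg_r (INR (b ^ S K))). lra. unfold Rdiv. rewrite Rmult_assoc, Rinv_l by lra. lra. }
    rewrite minus_INR by lia. simpl (INR 1).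
    assert (0 <= P K 1 / INR b) by (apply Rdiv_le_0_compat; lra).
    nra. }
  pose proof (Nat.div_mod r b ltac:(lia)) as Hd.
  set (r' := (r / b)%nat) in *. set (a := (r mod b)%nat) in *.
  assert (Ha : (a < b)%nat) by (apply Nat.mod_upper_bound; lia).
  destruct (Nat.eq_dec a 0) as [Za|Za].
  -
    assert (Hr' : (1 <= r' < r)%nat) by (rewrite Za in Hd; nia).
    destruct (IH r' ltac:(lia) ltac:(lia)) as [K0 HK0].
    exists (S K0). intros K HK. destruct K as [|K]; [lia|].
    rewrite Hd, Za, Nat.add_0_r, P_rec0.
    pose proof (lam_rec b hb r' 0 ltac:(lia)) as L. rewrite Nat.add_0_r in L.
    replace (Nat.eqb 0 (b-1)) with false in L by (symmetry; apply Nat.eqb_neq; lia).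
    simpl in L. rewrite !Nat.add_0_r in L. rewrite L. apply HK0. lia.
  - assert (Hr'' : (S r' < r)%nat) by nia.
    assert (J1 : exists K1, forall K, (K1 <= K)%nat -> 4 * P K r' >= INR b * INR (lambda b r')).
    { destruct (Nat.eq_dec r' 0) as [Z|Z].
      - exists 0%nat. intros K _. rewrite Z, P_zero, lam_0 by auto. simpl. lra.
      - destruct (IH r' ltac:(nia) ltac:(lia)) as [K1 HK1]. exists K1. intros K HK.
        specialize (HK1 K HK). lra. }
    destruct J1 as [K1 HK1].
    destruct (IH (S r') Hr'' ltac:(lia)) as [K2 HK2].
    exists (S (K1 + K2 + r + 5)). intros K HK. destruct K as [|K]; [lia|].
    assert (Hs : (S r' <= b ^ K)%nat) by (pose proof (pow_ge K); lia).
    rewrite Hd, P_rec by auto.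
    specialize (HK1 K ltac:(lia)). specialize (HK2 K ltac:(lia)).
    pose proof (lam_step r' a ltac:(lia) Ha) as LS.
    apply le_INR in LS. rewrite !plus_INR, !mult_INR in LS. simpl (INR 1) in LS.
    replace (INR 4) with 4 in LS by (simpl; lra).
    assert (Hp : 16 * INR b * INR b <= INR (b ^ S K)).
    { replace 16 with (INR 16) by (simpl; lra). rewrite <- !mult_INR. apply le_INR. apply bigpow. lia. }
    pose proof (INR_pow_pos (S K)) as Hpos.
    set (B := INR (b ^ S K)) in *.
    assert (Hab : INR a * INR (b - a) <= INR b * INR b).
    { rewrite minus_INR by lia. assert (INR a <= INR b) by (apply le_INR; lia). pose proof (pos_INR a). nra. }
    assert (Hab0 : 0 <= INR a * INR (b - a)) by (apply Rmult_le_pos; apply pos_INR).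
    assert (He : INR a * INR (b - a) * (2 / B) <= 1/8).
    { apply (Rmult_le_reg_r B). lra. unfold Rdiv. rewrite !Rmult_assoc, Rinv_l by lra. nra. }
    assert (Hm : INR (b - a) * (4 * P K r') + INR a * (4 * P K (S r'))
                  >= INR (b - a) * (INR b * INR (lambda b r')) + INR a * (INR b * INR (lambda b (S r')) + 1/2)).
    { pose proof (pos_INR (b - a)). pose proof (pos_INR a). nra. }
    assert (Hm2 : 4 * ((INR (b - a) * P K r' + INR a * P K (S r')) / INR b)
                  >= INR (b - a) * INR (lambda b r') + INR a * INR (lambda b (S r'))).
    { apply Rle_ge. apply (Rmult_le_reg_r (INR b)). lra.
      unfold Rdiv. replace (4 * ((INR (b - a) * P K r' + INR a * P K (S r')) * / INR b) * INR b)
        with (INR (b - a) * (4 * P K r') + INR a * (4 * P K (S r'))) by (field; lra).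
      pose proof (pos_INR a). nra. }
    nra.
Qed.

Theorem U_main : forall r, exists C K0, forall K, (K0 <= K)%nat -> P K r <= C.
Proof.
  assert (Hb : 2 <= INR b) by (replace 2 with (INR 2) by reflexivity; apply le_INR; auto).
  intros r. induction r as [r IH] using lt_wf_ind.
  destruct (Nat.eq_dec r 0) as [E0|E0].
  { exists 0, 0%nat. intros. subst. rewrite P_zero. lra. }
  destruct (Nat.eq_dec r 1) as [E1|E1].
  { subst r. exists (INR b), 0%nat. intros K _. induction K.
    - unfold P, S2. simpl. unfold D. rewrite Delta_0, s_1 by auto. simpl. lra.
    - rewrite P_one. pose proof (INR_pow_pos (S K)).
      assert (0 <= 2 / INR (b ^ S K)) by (apply Rdiv_le_0_compat; lra).
      assert (P K 1 / INR b <= 1).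
      { apply (Rmult_le_reg_r (INR b)). lra. unfold Rdiv. rewrite Rmult_assoc, Rinv_l by lra. lra. }
      rewrite minus_INR by lia. simpl (INR 1). nra. }
  pose proof (Nat.div_mod r b ltac:(lia)) as Hd.
  set (r' := (r / b)%nat) in *. set (a := (r mod b)%nat) in *.
  assert (Ha : (a < b)%nat) by (apply Nat.mod_upper_bound; lia).
  assert (Hr' : (r' < r)%nat) by (apply Nat.div_lt; lia).
  destruct (IH r' Hr') as [C1 [K1 HK1]].
  destruct (Nat.eq_dec a 0) as [Za|Za].
  - exists C1, (S K1). intros K HK. destruct K as [|K]; [lia|].
    rewrite Hd, Za, Nat.add_0_r, P_rec0. apply HK1. lia.
  - assert (Hr'' : (S r' < r)%nat) by nia.
    destruct (IH (S r') Hr'') as [C2 [K2 HK2]].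
    exists (Rabs C1 + Rabs C2 + INR b * INR b), (S (K1 + K2 + r)). intros K HK. destruct K as [|K]; [lia|].
    assert (Hs : (S r' <= b ^ K)%nat) by (pose proof (pow_ge K); lia).
    rewrite Hd, P_rec by auto.
    specialize (HK1 K ltac:(lia)). specialize (HK2 K ltac:(lia)).
    pose proof (P_nonneg K r'). pose proof (P_nonneg K (S r')).
    pose proof (INR_pow_pos (S K)).
    assert (0 <= 2 / INR (b ^ S K)) by (apply Rdiv_le_0_compat; lra).
    assert (Hab : INR a * INR (b - a) <= INR b * INR b).
    { rewrite minus_INR by lia. assert (INR a <= INR b) by (apply le_INR; lia). pose proof (pos_INR a). nra. }
    assert (Hab0 : 0 <= INR a * INR (b - a)) by (apply Rmult_le_pos; apply pos_INR).
    assert (Hw : INR (b - a) + INR a = INR b) by (rewrite minus_INR by lia; ring).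
    assert ((INR (b - a) * P K r' + INR a * P K (S r')) / INR b <= Rabs C1 + Rabs C2).
    { apply (Rmult_le_reg_r (INR b)). lra. unfold Rdiv. rewrite Rmult_assoc, Rinv_l by lra.
      pose proof (pos_INR a). pose proof (pos_INR (b - a)).
      pose proof (Rle_abs C1). pose proof (Rle_abs C2). pose proof (Rabs_pos C1). pose proof (Rabs_pos C2). nra. }
    nra.
Qed.

End Var.

Open Scope R_scope.

Lemma zs_plus F1 F2 W : sum_f_R0 (zterm (fun d => F1 d + F2 d)) W =
  sum_f_R0 (zterm F1) W + sum_f_R0 (zterm F2) W.
Proof. induction W; simpl; unfold zterm in *; [lra|]. rewrite IHW. lra. Qed.

Lemma zs_scal c F W : sum_f_R0 (zterm (fun d => c * F d)) W = c * sum_f_R0 (zterm F) W.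
Proof. induction W; simpl; unfold zterm in *; [lra|]. rewrite IHW. lra. Qed.

Lemma zs_ext F1 F2 W : (forall d, F1 d = F2 d) -> sum_f_R0 (zterm F1) W = sum_f_R0 (zterm F2) W.
Proof. intros H. induction W; simpl; unfold zterm in *; rewrite ?IHW, !H; reflexivity. Qed.

Lemma zs_le F1 F2 W : (forall d, F1 d <= F2 d) -> sum_f_R0 (zterm F1) W <= sum_f_R0 (zterm F2) W.
Proof. intros H. apply sum_Rle. intros n _. unfold zterm. pose proof (H (Z.of_nat n)). pose proof (H (- Z.of_nat n - 1)%Z). lra. Qed.

Lemma zs_zero W : sum_f_R0 (zterm (fun _ => 0)) W = 0.
Proof. induction W; simpl; unfold zterm in *; lra. Qed.

Definition inwin (W : nat) (x : Z) : bool := andb (- Z.of_nat W - 1 <=? x)%Z (x <=? Z.of_nat W)%Z.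

Ltac zcase := repeat match goal with
 | |- context [(?a =? ?c)%Z] => destruct (Z.eqb_spec a c)
 | |- context [(?a <=? ?c)%Z] => destruct (Z.leb_spec a c)
 end.

Lemma win1 x W (g : Z -> R) :
  sum_f_R0 (zterm (fun d => g d * (if Z.eqb x d then 1 else 0))) W = if inwin W x then g x else 0.
Proof.
  unfold inwin. induction W as [|W IHW].
  - simpl. unfold zterm. zcase; simpl; try lia; try (subst; simpl; lra).
  - simpl sum_f_R0. rewrite IHW. unfold zterm.
    rewrite Nat2Z.inj_succ. zcase; simpl; try lia; try (subst; simpl; lra).
Qed.

Lemma winsum (X : nat -> Z) (w : nat -> R) (g : Z -> R) W M :
  sum_f_R0 (zterm (fun d => g d * rsum (fun n => w n * (if Z.eqb (X n) d then 1 else 0)) M)) W =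
  rsum (fun n => w n * (if inwin W (X n) then g (X n) else 0)) M.
Proof.
  induction M.
  - simpl. rewrite (zs_ext _ (fun _ => 0)) by (intros; ring). apply zs_zero.
  - cbn [rsum]. rewrite <- IHM.
    rewrite (zs_ext _ (fun d => g d * rsum (fun n => w n * (if Z.eqb (X n) d then 1 else 0)) M
                          + w M * (g d * (if Z.eqb (X M) d then 1 else 0)))) by (intros; ring).
    rewrite zs_plus, zs_scal, win1. reflexivity.
Qed.

Lemma series_ge (a : nat -> R) (B : R) :
  (forall k, 0 <= a k) -> (forall W, sum_f_R0 a W <= B) -> forall W, sum_f_R0 a W <= Series a.
Proof.
  intros Hpos Hb W.
  assert (Hg : Un_growing (sum_f_R0 a)).
  { intros n. simpl. pose proof (Hpos (S n)). lra. }
  destruct (growing_cv _ Hg) as [l Hl].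
  { exists B. intros x [n ->]. apply Hb. }
  assert (Series a = l).
  { unfold Series. rewrite (Lim_seq_ext _ (sum_f_R0 a)) by (intros; apply sum_n_Reals).
    rewrite (is_lim_seq_unique _ l). reflexivity. apply is_lim_seq_Reals. auto. }
  rewrite H. apply growing_ineq; auto.
Qed.

Lemma lim_ge (u : nat -> R) l c : Un_cv u l ->
  (forall eps, eps > 0 -> exists N0, forall n, (n >= N0)%nat -> c - eps <= u n) -> c <= l.
Proof.
  intros Hu H. destruct (Rle_or_lt c l) as [|Hlt]; auto. exfalso.
  set (e := (c - l) / 2).
  destruct (Hu e ltac:(unfold e; lra)) as [N1 HN1].
  destruct (H e ltac:(unfold e; lra)) as [N2 HN2].
  specialize (HN1 (N1 + N2)%nat ltac:(lia)). specialize (HN2 (N1 + N2)%nat ltac:(lia)).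
  unfold R_dist in HN1. apply Rabs_def2 in HN1. unfold e in *. lra.
Qed.

Lemma lim_le (u : nat -> R) l c : Un_cv u l ->
  (forall eps, eps > 0 -> exists N0, forall n, (n >= N0)%nat -> u n <= c + eps) -> l <= c.
Proof.
  intros Hu H. destruct (Rle_or_lt l c) as [|Hlt]; auto. exfalso.
  set (e := (l - c) / 2).
  destruct (Hu e ltac:(unfold e; lra)) as [N1 HN1].
  destruct (H e ltac:(unfold e; lra)) as [N2 HN2].
  specialize (HN1 (N1 + N2)%nat ltac:(lia)). specialize (HN2 (N1 + N2)%nat ltac:(lia)).
  unfold R_dist in HN1. apply Rabs_def2 in HN1. unfold e in *. lra.
Qed.

Lemma nat_archi (A : R) : exists n : nat, A <= INR n.
Proof.
  destruct (INR_archimed 1 A ltac:(lra)) as [n Hn]. exists n. lra.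
Qed.

Lemma cube_le K : (10 <= K)%nat -> (K ^ 3 <= 2 ^ K)%nat.
Proof.
  intros H. induction H.
  - simpl. lia.
  - rewrite (Nat.pow_succ_r' 2 m). assert (S m ^ 3 <= 2 * m ^ 3)%nat.
    { simpl. assert (m >= 4)%nat by lia. nia. }
    lia.
Qed.

Lemma len_filter p N : INR (length (filter p (seq 0 N))) = rsum (fun n => if p n then 1 else 0) N.
Proof.
  induction N. reflexivity.
  rewrite seq_S, filter_app, length_app. cbn [rsum]. rewrite plus_INR, IHN.
  simpl. destruct (p N); simpl; lra.
Qed.

Open Scope R_scope.

Section Main.
Variable b r : nat.
Hypothesis hb : (2 <= b)%nat.
Hypothesis hr : (1 <= r)%nat.

Definition ind (p : bool) : R := if p then 1 else 0.
Definition cnt (d : Z) (N : nat) : R := rsum (fun n => ind (Z.eqb (Delta b r n) d)) N.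
Definition gw (K n : nat) : R := ind (n + r <? b ^ K)%nat.
Definition good (K : nat) (d : Z) : R := rsum (fun n => gw K n * ind (Z.eqb (Delta b r n) d)) (b ^ K).
Definition nu (K : nat) (d : Z) : R := good K d / INR (b ^ K).

Lemma ind_01 p : 0 <= ind p <= 1.
Proof. unfold ind; destruct p; lra. Qed.

Lemma freq_eq d N : freq b r d N = cnt d N / INR N.
Proof. unfold freq, cnt. rewrite len_filter. reflexivity. Qed.

Lemma good_bounds K d : 0 <= good K d <= INR (b ^ K).
Proof.
  unfold good. split.
  - apply rsum_nonneg. intros n _. unfold gw. pose proof (ind_01 (n + r <? b ^ K)%nat). pose proof (ind_01 (Delta b r n =? d)%Z). nra.
  - rewrite <- (Rmult_1_r (INR (b ^ K))), <- rsum_const. apply rsum_le. intros. unfold gw.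
    pose proof (ind_01 (k + r <? b ^ K)%nat). pose proof (ind_01 (Delta b r k =? d)%Z). nra.
Qed.

Lemma block_low K d i : good K d <= rsum (fun m => ind (Z.eqb (Delta b r (i * b ^ K + m)) d)) (b ^ K).
Proof.
  apply rsum_le. intros m Hm. unfold gw, ind.
  destruct (Nat.ltb_spec (m + r) (b ^ K)).
  - rewrite Delta_block by auto. destruct (Delta b r m =? d)%Z; lra.
  - destruct (Delta b r m =? d)%Z; destruct (Delta b r (i * b ^ K + m) =? d)%Z; lra.
Qed.

Lemma block_up K d i : rsum (fun m => ind (Z.eqb (Delta b r (i * b ^ K + m)) d)) (b ^ K) <= good K d + INR r.
Proof.
  eapply Rle_trans.
  2:{ apply Rplus_le_compat_l. apply (rsum_sub_le_bad (b ^ K) r). }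
  unfold good. rewrite <- rsum_plus. apply rsum_le. intros m Hm. unfold gw, ind.
  destruct (Nat.ltb_spec (m + r) (b ^ K)).
  - rewrite Delta_block by auto. destruct (Delta b r m =? d)%Z; lra.
  - destruct (Delta b r m =? d)%Z; destruct (Delta b r (i * b ^ K + m) =? d)%Z; lra.
Qed.

Lemma cnt_nonneg d N : 0 <= cnt d N.
Proof. apply rsum_nonneg. intros. apply ind_01. Qed.

Lemma cnt_mono d N1 N2 : (N1 <= N2)%nat -> cnt d N1 <= cnt d N2.
Proof. intros. apply rsum_mono; auto. intros. apply ind_01. Qed.

Lemma cnt_blocks_low K d q : INR q * good K d <= cnt d (q * b ^ K).
Proof.
  unfold cnt. rewrite rsum_mult. rewrite <- rsum_const. apply rsum_le. intros i _. apply block_low.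
Qed.

Lemma cnt_blocks_up K d q : cnt d (q * b ^ K) <= INR q * (good K d + INR r).
Proof.
  unfold cnt. rewrite rsum_mult. rewrite <- rsum_const. apply rsum_le. intros i _. apply block_up.
Qed.

Lemma freq_bounds K d N : (1 <= N)%nat ->
  nu K d - INR (b ^ K) / INR N <= freq b r d N <=
  nu K d + INR r / INR (b ^ K) + (INR (b ^ K) + INR r) / INR N.
Proof.
  intros HN. rewrite freq_eq. unfold nu.
  set (M := (b ^ K)%nat). assert (HM : (0 < M)%nat) by (apply pow_pos_nat; auto).
  set (q := (N / M)%nat).
  pose proof (Nat.div_mod N M ltac:(lia)) as Hd. fold q in Hd.
  assert (Hmod : (N mod M < M)%nat) by (apply Nat.mod_upper_bound; lia).
  assert (Hlo : cnt d (q * M) <= cnt d N) by (apply cnt_mono; nia).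
  assert (Hhi : cnt d N <= cnt d (S q * M)) by (apply cnt_mono; nia).
  pose proof (cnt_blocks_low K d q) as B1. pose proof (cnt_blocks_up K d (S q)) as B2.
  fold M in B1, B2. rewrite S_INR in B2.
  pose proof (good_bounds K d) as [G0 G1]. fold M in G1.
  assert (Eq1 : INR N = INR M * INR q + INR (N mod M)) by (rewrite Hd at 1; rewrite plus_INR, mult_INR; ring).
  assert (Hm1 : INR (N mod M) < INR M) by (apply lt_INR; auto).
  pose proof (pos_INR (N mod M)). pose proof (pos_INR q).
  assert (HMr : 0 < INR M) by (apply lt_0_INR; auto).
  assert (HNr : 0 < INR N) by (apply lt_0_INR; lia).
  pose proof (pos_INR r).
  set (g := good K d) in *. set (c := cnt d N) in *.
  set (Mr := INR M) in *. set (Nr := INR N) in *. set (qr := INR q) in *.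
  split.
  - apply (Rmult_le_reg_r (Mr * Nr)). nra.
    replace ((g / Mr - Mr / Nr) * (Mr * Nr)) with (g * Nr - Mr * Mr) by (field; lra).
    replace (c / Nr * (Mr * Nr)) with (c * Mr) by (field; lra).
    nra.
  - apply (Rmult_le_reg_r (Mr * Nr)). nra.
    replace ((g / Mr + INR r / Mr + (Mr + INR r) / Nr) * (Mr * Nr)) with (g * Nr + INR r * Nr + (Mr + INR r) * Mr) by (field; lra).
    replace (c / Nr * (Mr * Nr)) with (c * Mr) by (field; lra).
    nra.
Qed.

Lemma INR_bK_gt K : INR K < INR (b ^ K).
Proof. apply lt_INR. apply pow_ge; auto. Qed.

Lemma small_M (A : R) : exists K, forall K', (K <= K')%nat -> A < INR (b ^ K').
Proof.
  destruct (nat_archi A) as [n Hn]. exists n. intros K' HK.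
  pose proof (INR_bK_gt K'). assert (INR n <= INR K') by (apply le_INR; auto). lra.
Qed.

Lemma freq_cauchy d : Cauchy_crit (freq b r d).
Proof.
  intros eps Heps.
  pose proof (pos_INR r).
  destruct (small_M (3 * INR r / eps)) as [K HK]. specialize (HK K (le_n _)).
  set (Mr := INR (b ^ K)) in *.
  assert (HMr : 0 < Mr) by (unfold Mr; apply INR_pow_pos; auto).
  assert (H1 : INR r / Mr < eps / 3).
  { apply (Rmult_lt_reg_r (Mr * 3 / eps)). apply Rdiv_lt_0_compat; lra.
    replace (INR r / Mr * (Mr * 3 / eps)) with (3 * INR r / eps) by (field; lra).
    replace (eps / 3 * (Mr * 3 / eps)) with Mr by (field; lra). lra. }
  destruct (nat_archi (3 * (Mr + INR r) / eps)) as [N0 HN0].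
  exists (S N0). intros n m Hn Hm.
  assert (Hgen : forall k, (k >= S N0)%nat -> (Mr + INR r) / INR k < eps / 3).
  { intros k Hk. assert (Hk' : INR N0 < INR k) by (apply lt_INR; lia).
    assert (0 < INR k) by (pose proof (pos_INR N0); lra).
    apply (Rmult_lt_reg_r (INR k * 3 / eps)). apply Rdiv_lt_0_compat; lra.
    replace ((Mr + INR r) / INR k * (INR k * 3 / eps)) with (3 * (Mr + INR r) / eps) by (field; lra).
    replace (eps / 3 * (INR k * 3 / eps)) with (INR k) by (field; lra). lra. }
  pose proof (Hgen n Hn). pose proof (Hgen m Hm).
  pose proof (freq_bounds K d n ltac:(lia)) as [A1 A2].
  pose proof (freq_bounds K d m ltac:(lia)) as [B1 B2]. fold Mr in A1, A2, B1, B2.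
  assert (Mr / INR n <= (Mr + INR r) / INR n).
  { unfold Rdiv. apply Rmult_le_compat_r. left. apply Rinv_0_lt_compat. apply lt_0_INR. lia. lra. }
  assert (Mr / INR m <= (Mr + INR r) / INR m).
  { unfold Rdiv. apply Rmult_le_compat_r. left. apply Rinv_0_lt_compat. apply lt_0_INR. lia. lra. }
  unfold Rdist. apply Rabs_def1; lra.
Qed.

Lemma mu_lim d : Un_cv (freq b r d) (mu b r d).
Proof.
  destruct (Rcomplete.R_complete _ (freq_cauchy d)) as [l Hl].
  assert (mu b r d = l).
  { unfold mu. rewrite (is_lim_seq_unique _ l). reflexivity. apply is_lim_seq_Reals. auto. }
  rewrite H. auto.
Qed.

Lemma eventually_small (c eps : R) : eps > 0 -> exists N0, forall n, (n >= N0)%nat -> c / INR n <= eps /\ (1 <= n)%nat.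
Proof.
  intros He. destruct (nat_archi (Rabs c / eps)) as [N0 HN0]. exists (S N0). intros n Hn.
  split; [|lia].
  assert (INR N0 < INR n) by (apply lt_INR; lia).
  assert (0 < INR n) by (pose proof (pos_INR N0); lra).
  apply (Rmult_le_reg_r (INR n)). lra. unfold Rdiv. rewrite Rmult_assoc, Rinv_l by lra.
  pose proof (Rle_abs c).
  assert (Rabs c <= eps * INR n).
  { apply (Rmult_le_reg_r (/ eps)). apply Rinv_0_lt_compat; lra.
    replace (eps * INR n * / eps) with (INR n) by (field; lra). unfold Rdiv in HN0. lra. }
  lra.
Qed.

Lemma mu_ge K d : nu K d <= mu b r d.
Proof.
  apply (lim_ge (freq b r d)). apply mu_lim.
  intros eps He. destruct (eventually_small (INR (b ^ K)) eps He) as [N0 HN0].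
  exists N0. intros n Hn. destruct (HN0 n Hn) as [H1 H2].
  pose proof (freq_bounds K d n H2). lra.
Qed.

Lemma mu_le K d : mu b r d <= nu K d + INR r / INR (b ^ K).
Proof.
  apply (lim_le (freq b r d)). apply mu_lim.
  intros eps He. destruct (eventually_small (INR (b ^ K) + INR r) eps He) as [N0 HN0].
  exists N0. intros n Hn. destruct (HN0 n Hn) as [H1 H2].
  pose proof (freq_bounds K d n H2). lra.
Qed.

Lemma nu_nonneg K d : 0 <= nu K d.
Proof. unfold nu. apply Rdiv_le_0_compat. apply good_bounds. apply INR_pow_pos; auto. Qed.

End Main.

Open Scope R_scope.

Section Fin.
Variable b r : nat.
Hypothesis hb : (2 <= b)%nat.
Hypothesis hr : (1 <= r)%nat.
Variable m : R.

Lemma sumW K W : sum_f_R0 (zterm (fun d => (IZR d - m) ^ 2 * nu b r K d)) W =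
  rsum (fun n => gw b r K n / INR (b ^ K) * (if inwin W (Delta b r n) then (IZR (Delta b r n) - m) ^ 2 else 0)) (b ^ K).
Proof.
  rewrite <- (winsum (Delta b r) (fun n => gw b r K n / INR (b ^ K)) (fun d => (IZR d - m) ^ 2)).
  apply zs_ext. intros d. f_equal. unfold nu, good. unfold Rdiv. rewrite Rmult_comm, <- rsum_scal.
  apply rsum_ext. intros. unfold ind. ring.
Qed.

Lemma expand K : (r <= b ^ K)%nat ->
  rsum (fun n => / INR (b ^ K) * (IZR (Delta b r n) - m) ^ 2) (b ^ K) =
  P b K r - 2 * m * INR r / INR (b ^ K) + m ^ 2.
Proof.
  intros H. rewrite rsum_scal.
  rewrite (rsum_ext _ (fun n => D b r n ^ 2 + ((-2 * m) * D b r n + m ^ 2))) by (intros; unfold D; ring).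
  rewrite !rsum_plus, rsum_scal, rsum_const.
  fold (S2 b K r). fold (S1 b K r). rewrite S1_val by auto. unfold P.
  pose proof (INR_pow_pos b hb K). field. lra.
Qed.

Lemma D_abs K n : (n < b ^ K)%nat -> Rabs (IZR (Delta b r n) - m) <= (INR r + INR b + Rabs m) * (INR K + 1).
Proof.
  intros Hn. pose proof (Delta_le b hb r n). pose proof (Delta_ge b hb K r n Hn).
  apply IZR_le in H. apply IZR_le in H0. rewrite <- INR_IZR_INZ in H.
  rewrite opp_IZR, <- INR_IZR_INZ, mult_INR, minus_INR in H0 by lia.
  pose proof (pos_INR K). pose proof (pos_INR r). pose proof (Rabs_pos m).
  assert (HB : 1 <= INR b) by (replace 1 with (INR 1) by reflexivity; apply le_INR; lia).
  simpl (INR 1) in H0.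
  apply Rabs_le. pose proof (Rle_abs m). pose proof (Rle_abs (-m)). rewrite Rabs_Ropp in *. split; nra.
Qed.

End Fin.

Lemma growth b (hb : (2 <= b)%nat) (A : R) (K0 : nat) : 0 <= A -> exists K, (K0 <= K)%nat /\ A * (INR K + 1) ^ 2 <= INR (b ^ K).
Proof.
  intros HA. destruct (nat_archi (4 * A)) as [n Hn].
  exists (n + K0 + 10)%nat. split; [lia|].
  set (K := (n + K0 + 10)%nat).
  assert (HK : INR n <= INR K) by (apply le_INR; unfold K; lia).
  assert (HK10 : 10 <= INR K) by (replace 10 with (INR 10) by (simpl; lra); apply le_INR; unfold K; lia).
  assert (H3 : INR (K ^ 3) <= INR (b ^ K)).
  { apply le_INR. eapply Nat.le_trans. apply cube_le. unfold K; lia. apply Nat.pow_le_mono_l. lia. }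
  rewrite pow_INR in H3.
  assert ((INR K + 1) ^ 2 <= 4 * INR K ^ 2) by nra.
  assert (A * (INR K + 1) ^ 2 <= A * (4 * INR K ^ 2)) by (apply Rmult_le_compat_l; auto).
  assert (4 * A * INR K ^ 2 <= INR K * INR K ^ 2) by (apply Rmult_le_compat_r; nra).
  nra.
Qed.

Theorem main_thm (b r : nat) (hb : (2 <= b)%nat) (hr : (1 <= r)%nat) :
  var_mu b r >= INR b / 4 * INR (lambda b r).
Proof.
  set (m := mean_mu b r).
  set (f := fun d => (IZR d - m) ^ 2 * mu b r d).
  assert (Hv : var_mu b r = Series (zterm f)) by reflexivity.
  assert (Hf : forall d, 0 <= f d).
  { intros d. unfold f. apply Rmult_le_pos. apply pow2_ge_0.
    eapply Rle_trans. apply (nu_nonneg b r hb 0). apply mu_ge; auto. }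
  assert (Hz : forall k, 0 <= zterm f k) by (intros; unfold zterm; pose proof (Hf (Z.of_nat k)); pose proof (Hf (- Z.of_nat k - 1)%Z); lra).
  pose proof (pos_INR r) as Hr0.
  pose proof (Rabs_pos m) as Hm0.
  destruct (U_main b hb r) as [C [K0 HC]].
  assert (Hup : forall W, sum_f_R0 (zterm f) W <= C + 2 * Rabs m * INR r + m ^ 2 + 1).
  { intros W.
    set (CW := sum_f_R0 (zterm (fun d => (IZR d - m) ^ 2)) W).
    assert (HCW : 0 <= CW).
    { unfold CW. apply cond_pos_sum. intros. unfold zterm. pose proof (pow2_ge_0 (IZR (Z.of_nat n) - m)).
      pose proof (pow2_ge_0 (IZR (- Z.of_nat n - 1) - m)). lra. }
    destruct (nat_archi (INR r * CW)) as [n Hn].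
    set (K := (n + K0 + r)%nat).
    set (Mr := INR (b ^ K)).
    assert (HMK : INR K < Mr) by (apply INR_bK_gt; auto).
    assert (HnK : INR n <= INR K) by (apply le_INR; unfold K; lia).
    assert (HM1 : 1 <= Mr).
    { unfold Mr. replace 1 with (INR 1) by reflexivity. apply le_INR. pose proof (pow_pos_nat b hb K). lia. }
    assert (Hrk : (r <= b ^ K)%nat) by (pose proof (pow_ge b hb K); unfold K in *; lia).
    eapply Rle_trans.
    { apply (zs_le _ (fun d => (IZR d - m) ^ 2 * nu b r K d + (INR r / Mr) * (IZR d - m) ^ 2)).
      intros d. unfold f. pose proof (mu_le b r hb hr K d). pose proof (pow2_ge_0 (IZR d - m)).
      fold Mr in H. nra. }
    rewrite zs_plus, zs_scal. fold CW. rewrite sumW.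
    assert (H1 : INR r / Mr * CW <= 1).
    { apply (Rmult_le_reg_r Mr). lra. replace (INR r / Mr * CW * Mr) with (INR r * CW) by (field; lra). lra. }
    assert (H2 : rsum (fun n0 => gw b r K n0 / INR (b ^ K) *
        (if inwin W (Delta b r n0) then (IZR (Delta b r n0) - m) ^ 2 else 0)) (b ^ K)
        <= rsum (fun n => / INR (b ^ K) * (IZR (Delta b r n) - m) ^ 2) (b ^ K)).
    { apply rsum_le. intros k _. unfold gw, ind. fold Mr.
      assert (0 < / Mr) by (apply Rinv_0_lt_compat; lra).
      pose proof (pow2_ge_0 (IZR (Delta b r k) - m)).
      destruct (inwin W (Delta b r k)); destruct (k + r <? b ^ K)%nat; unfold Rdiv; nra. }
    rewrite expand in H2 by auto.
    specialize (HC K ltac:(unfold K; lia)).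
    assert (H3 : - (2 * m * INR r / Mr) <= 2 * Rabs m * INR r).
    { assert (Rabs (2 * m * INR r / Mr) <= 2 * Rabs m * INR r).
      { unfold Rdiv. rewrite !Rabs_mult, Rabs_inv, (Rabs_right 2), (Rabs_right (INR r)), (Rabs_right Mr) by lra.
        assert (/ Mr <= 1). { rewrite <- Rinv_1. apply Rinv_le_contravar; lra. }
        assert (0 <= 2 * Rabs m * INR r) by nra.
        pose proof (Rmult_le_compat_l (2 * Rabs m * INR r) (/ Mr) 1 ltac:(auto) ltac:(auto)). lra. }
      pose proof (Rle_abs (- (2 * m * INR r / Mr))). rewrite Rabs_Ropp in H0. lra. }
    fold Mr in H2 |- *. lra. }
  destruct (I_main b hb r hr) as [K1 HK1].
  set (c := INR r + INR b + Rabs m).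
  destruct (growth b hb (8 * (INR r ^ 2 + INR r * c ^ 2)) (K1 + r) ltac:(nra)) as [K [HK HKg]].
  set (Mr := INR (b ^ K)) in *.
  assert (HMr : 0 < Mr) by (apply INR_pow_pos; auto).
  assert (HM1 : 1 <= Mr).
  { unfold Mr. replace 1 with (INR 1) by reflexivity. apply le_INR. pose proof (pow_pos_nat b hb K). lia. }
  assert (Hrk : (r <= b ^ K)%nat) by (pose proof (pow_ge b hb K); lia).
  set (W := (r + (b - 1) * K)%nat).
  assert (Hlow : sum_f_R0 (zterm f) W >= INR b * INR (lambda b r) / 4).
  { eapply Rge_trans.
    { apply Rle_ge. apply (zs_le (fun d => (IZR d - m) ^ 2 * nu b r K d)).
      intros d. unfold f. apply Rmult_le_compat_l. apply pow2_ge_0. apply mu_ge; auto. }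
    rewrite sumW.
    set (bad := fun n : nat => if (n + r <? b ^ K)%nat then 0 else 1).
    set (Bd := c * (INR K + 1)).
    rewrite (rsum_ext _ (fun n => / Mr * (IZR (Delta b r n) - m) ^ 2
                + (- / Mr) * (bad n * (IZR (Delta b r n) - m) ^ 2))).
    2:{ intros k Hk. assert (Hin : inwin W (Delta b r k) = true).
        { unfold inwin. pose proof (Delta_le b hb r k). pose proof (Delta_ge b hb K r k Hk).
          apply andb_true_intro. split; apply Z.leb_le; unfold W; nia. }
        rewrite Hin. unfold gw, ind, bad. fold Mr. destruct (k + r <? b ^ K)%nat; field; lra. }
    rewrite rsum_plus, (rsum_scal (- / Mr)). unfold Mr. rewrite expand by auto. fold Mr.
    assert (Hbad : rsum (fun n => bad n * (IZR (Delta b r n) - m) ^ 2) (b ^ K) <= INR r * Bd ^ 2).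
    { eapply Rle_trans. apply (rsum_le _ (fun n => Bd ^ 2 * bad n)).
      - intros k Hk. pose proof (D_abs b r hb hr m K k Hk) as HA. fold c Bd in HA.
        assert (HB2 : (IZR (Delta b r k) - m) ^ 2 <= Bd ^ 2).
        { rewrite <- pow2_abs. pose proof (Rabs_pos (IZR (Delta b r k) - m)). nra. }
        unfold bad. destruct (k + r <? b ^ K)%nat; nra.
      - rewrite rsum_scal. unfold bad. pose proof (rsum_sub_le_bad (b ^ K) r). pose proof (pow2_ge_0 Bd). nra. }
    specialize (HK1 K ltac:(lia)).
    assert (Hsq : 0 <= (m - INR r / Mr) ^ 2) by apply pow2_ge_0.
    assert (HK1' : 1 <= (INR K + 1) ^ 2) by (pose proof (pos_INR K); nra).
    assert (E1 : INR r ^ 2 / Mr ^ 2 <= INR r ^ 2 * (INR K + 1) ^ 2 / Mr).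
    { apply (Rmult_le_reg_r (Mr ^ 2)). nra.
      replace (INR r ^ 2 / Mr ^ 2 * Mr ^ 2) with (INR r ^ 2) by (field; lra).
      replace (INR r ^ 2 * (INR K + 1) ^ 2 / Mr * Mr ^ 2) with (INR r ^ 2 * (INR K + 1) ^ 2 * Mr) by (field; lra).
      assert (HX : 1 * 1 <= (INR K + 1) ^ 2 * Mr) by (apply Rmult_le_compat; lra).
      pose proof (Rmult_le_compat_l (INR r ^ 2) _ _ (pow2_ge_0 _) HX).
      replace (INR r ^ 2 * (INR K + 1) ^ 2 * Mr) with (INR r ^ 2 * ((INR K + 1) ^ 2 * Mr)) by ring. lra. }
    assert (E2 : INR r ^ 2 * (INR K + 1) ^ 2 / Mr + / Mr * (INR r * Bd ^ 2) <= 1 / 8).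
    { apply (Rmult_le_reg_r (8 * Mr)). lra.
      replace ((INR r ^ 2 * (INR K + 1) ^ 2 / Mr + / Mr * (INR r * Bd ^ 2)) * (8 * Mr))
        with (8 * (INR r ^ 2 * (INR K + 1) ^ 2 + INR r * Bd ^ 2)) by (field; lra).
      unfold Bd. lra. }
    assert (E3 : P b K r - 2 * m * INR r / Mr + m ^ 2 >= P b K r - INR r ^ 2 / Mr ^ 2).
    { replace (P b K r - 2 * m * INR r / Mr + m ^ 2) with (P b K r - INR r ^ 2 / Mr ^ 2 + (m - INR r / Mr) ^ 2)
        by (field; lra). lra. }
    assert (E4 : / Mr * rsum (fun n => bad n * (IZR (Delta b r n) - m) ^ 2) (b ^ K) <= / Mr * (INR r * Bd ^ 2)).
    { apply Rmult_le_compat_l. left. apply Rinv_0_lt_compat. lra. auto. }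
    lra. }
  rewrite Hv. apply Rle_ge.
  eapply Rle_trans; [| apply (series_ge _ _ Hz Hup W)]. lra.
Qed.


Theorem mainTheorem16 (b r : nat) (hb : (2 <= b)%nat) (hr : (1 <= r)%nat) :
  var_mu b r >= INR b / 4 * INR (lambda b r).
Proof. exact (main_thm b r hb hr). Qed.
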